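(* Let $\sigma$ be a connected non-crossing partition and let $\tau=1[\rho]$ for some non-crossing partition $\rho$. If $\sigma$ and $\tau$ are nc-equivalent, then $1[\sigma]$ and $\tau1=1[\rho]1$ are nc-equivalent.
   Context: Set partitions are written in canonical sequential form (restricted growth words). Pattern containment means having a subsequence order-isomorphic to the pattern; a partition is non-crossing if it avoids $1212$. Bracket notation: in a word built from letters and bracketed partitions, $[\sigma]$ stands for $\sigma+r$ (add $r$ to every letter), where $r$ is the number of distinct symbols appearing before it; so $1[\rho]$ is $1$ followed by $\rho+1$, and $1[\rho]1$ appends a final $1$. $\alpha[\beta]$ is $\alpha$ followed by $\beta$ shifted by the number of blocks of $\alpha$; a partition is connected if it cannot be written as $\alpha[\beta]$ with $\alpha,\beta$ nonempty. Patterns $\alpha,\beta$ are nc-equivalent if for every $n\ge0$ the number of partitions of $[n]$ avoiding $1212$ and $\alpha$ equals the number avoiding $1212$ and $\beta$. *)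

(* Defs.v *)
(* Set partitions as restricted growth words (letters >= 1). *)
From mathcomp Require Import all_boot.
Set Implicit Arguments. Unset Strict Implicit. Unset Printing Implicit Defensive.

Fixpoint rgw_aux (m : nat) (s : seq nat) : bool :=
  if s is x :: s' then (0 < x <= m.+1) && rgw_aux (maxn m x) s' else true.

Definition rgw (w : seq nat) : bool := rgw_aux 0 w.

(* number of blocks (= number of distinct letters, for an rgw) *)
Definition nblocks (w : seq nat) : nat := foldr maxn 0 w.

Definition shift (r : nat) (s : seq nat) : seq nat := map (addn r) s.

Definition oiso (u v : seq nat) : bool :=
  (size u == size v) &&
  all (fun i => all (fun j =>
        (nth 0 u i < nth 0 u j) == (nth 0 v i < nth 0 v j))
      (iota 0 (size u))) (iota 0 (size u)).

Fixpoint subseqs (w : seq nat) : seq (seq nat) :=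
  if w is x :: w' then [seq x :: t | t <- subseqs w'] ++ subseqs w'
  else [:: [::]].

Definition contains (w p : seq nat) : bool := has (fun s => oiso s p) (subseqs w).

Definition noncrossing (w : seq nat) : bool :=
  rgw w && ~~ contains w [:: 1; 2; 1; 2].

Definition bracket (a b : seq nat) : seq nat := a ++ shift (nblocks a) b.

Definition connected (s : seq nat) : Prop :=
  ~ exists a b : seq nat,
      [/\ rgw a, rgw b, a != [::], b != [::] & s = bracket a b].

Fixpoint words (k m : nat) : seq (seq nat) :=
  if k is k'.+1 then flatten [seq [seq x :: w | w <- words k' m] | x <- iota 1 m]
  else [:: [::]].

Definition nc_av (n : nat) (alpha : seq nat) : nat :=
  count (fun w => noncrossing w && ~~ contains w alpha) (words n n).

Definition nc_equiv (alpha beta : seq nat) : Prop :=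
  forall n : nat, nc_av n alpha = nc_av n beta.

(* Main.v *)
Require Import Defs.
From mathcomp Require Import all_boot zify.
Set Implicit Arguments. Unset Strict Implicit. Unset Printing Implicit Defensive.

Lemma mem_subseqs w s : (s \in subseqs w) = subseq s w.
Proof.
elim: w s => [|y w IH] [|x s] //=.
- by rewrite mem_cat IH sub0seq orbT.
- rewrite mem_cat IH.
  have -> : (x :: s \in [seq y :: t | t <- subseqs w]) = (x == y) && (s \in subseqs w).
    case: (x =P y) => [->|ne] /=.
      have inj : injective (cons y) by move=> a b [].
      by rewrite (mem_map inj).
    by apply/mapP => -[t _ [] ].
  rewrite IH; case: (x =P y) => [->|] /=; last by [].
  by case H: (subseq s w) => //=; apply/negP => /cons_subseq; rewrite H.
Qed.

Lemma containsP w p : reflect (exists2 s, subseq s w & oiso s p) (contains w p).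
Proof. by apply: (iffP hasP) => -[s]; rewrite ?mem_subseqs => H1 H2; exists s; rewrite ?mem_subseqs. Qed.

Lemma oisoP u v : reflect (size u = size v /\ forall i j, i < size u -> j < size u ->
   (nth 0 u i < nth 0 u j) = (nth 0 v i < nth 0 v j)) (oiso u v).
Proof.
rewrite /oiso; case: eqP => Hs /=; last by right => -[].
apply: (iffP allP) => [H|[_ H] i].
- split=> // i j Hi Hj; have := H i; rewrite mem_iota /= => /(_ Hi) /allP /(_ j).
  by rewrite mem_iota /= => /(_ Hj) /eqP.
- rewrite mem_iota /= => Hi; apply/allP => j; rewrite mem_iota /= => Hj.
  by rewrite H.
Qed.

Lemma oiso_nth u v i j : oiso u v -> i < size u -> j < size u ->
   (nth 0 u i < nth 0 u j) = (nth 0 v i < nth 0 v j).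
Proof. by move/oisoP => [_ H]; apply: H. Qed.

Lemma oiso_size u v : oiso u v -> size u = size v.
Proof. by move/oisoP => []. Qed.

Lemma oiso_map f g u v : {mono f : x y / x < y} -> {mono g : x y / x < y} ->
  oiso (map f u) (map g v) = oiso u v.
Proof.
move=> mf mg; apply/oisoP/oisoP; rewrite !size_map => -[Hs H]; split=> // i j Hi Hj.
- by have := H i j Hi Hj; rewrite !(nth_map 0) -?Hs // mf mg.
- by rewrite !(nth_map 0) -?Hs // mf mg H.
Qed.

Lemma oiso_mapl f u v : {mono f : x y / x < y} -> oiso (map f u) v = oiso u v.
Proof. by move=> mf; rewrite -(map_id v) oiso_map // map_id. Qed.

Lemma oiso_mapr f u v : {mono f : x y / x < y} -> oiso u (map f v) = oiso u v.
Proof. by move=> mf; rewrite -(map_id u) oiso_map // map_id. Qed.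

Lemma oiso_catl u1 u2 v1 v2 : size u1 = size v1 -> oiso (u1 ++ u2) (v1 ++ v2) -> oiso u1 v1.
Proof.
move=> Hs /oisoP [_ H]; apply/oisoP; split=> // i j Hi Hj.
have := H i j; rewrite !nth_cat -Hs Hi Hj size_cat; apply; lia.
Qed.

Lemma oiso_cons x y u v : oiso (x :: u) (y :: v) =
  oiso u v && all (fun i => ((x < nth 0 u i) == (y < nth 0 v i)) &&
                            ((nth 0 u i < x) == (nth 0 v i < y))) (iota 0 (size u)).
Proof.
apply/oisoP/andP => [[/= [Hs] H]|[/oisoP [Hs H] /allP H2]].
- split.
    by apply/oisoP; split=> // i j Hi Hj; apply: (H i.+1 j.+1).
  apply/allP => i; rewrite mem_iota /= => Hi.
  rewrite add0n in Hi; have /= -> := H 0 i.+1 isT Hi.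
  by have /= -> := H i.+1 0 Hi isT; rewrite !eqxx.
- split; first by rewrite /= Hs.
  move=> [|i] [|j] //=; rewrite ?ltnS => Hi Hj.
  + by rewrite !ltnn.
  + by have /andP[/eqP -> _] := H2 j ltac:(by rewrite mem_iota).
  + by have /andP[_ /eqP ->] := H2 i ltac:(by rewrite mem_iota).
  + exact: H.
Qed.

Lemma oiso_rcons x y u v : size u = size v -> oiso (rcons u x) (rcons v y) =
  oiso u v && all (fun i => ((x < nth 0 u i) == (y < nth 0 v i)) &&
                            ((nth 0 u i < x) == (nth 0 v i < y))) (iota 0 (size u)).
Proof.
move=> Hs; apply/oisoP/andP => [[_ H]|[/oisoP [_ H] /allP H2]].
- rewrite size_rcons in H; split.
    apply/oisoP; split=> // i j Hi Hj; have := H i j; rewrite !nth_rcons -Hs Hi Hj; apply; exact: ltnW.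
  apply/allP => i; rewrite mem_iota /= add0n => Hi.
  have E1 := H (size u) i (ltnSn _) (ltnW Hi); have E2 := H i (size u) (ltnW Hi) (ltnSn _).
  rewrite !nth_rcons -Hs Hi ltnn eqxx in E1 E2.
  by rewrite E1 E2 !eqxx.
- split; first by rewrite !size_rcons Hs.
  rewrite size_rcons => i j Hi Hj.
  have Ci : i < size u \/ i = size u by lia.
  have Cj : j < size u \/ j = size u by lia.
  case: Ci => [Hi'|->]; case: Cj => [Hj'|->];
  rewrite !nth_rcons -?Hs ?ltnn ?eqxx ?Hi' ?Hj'.
  + by rewrite H.
  + by have /andP[_ /eqP ->] := H2 i ltac:(by rewrite mem_iota).
  + by have /andP[/eqP -> _] := H2 j ltac:(by rewrite mem_iota).
  + by [].
Qed.

Lemma oiso1212P s : reflect (exists a b, a < b /\ s = [:: a; b; a; b]) (oiso s [:: 1; 2; 1; 2]).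
Proof.
apply: (iffP idP).
- move=> H; have Hs := oiso_size H.
  move: s Hs H => [|a [|b [|c [|d [|? ?]]]]] // _ H.
  have := oiso_nth H (i:=0) (j:=1) isT isT.
  have := oiso_nth H (i:=0) (j:=2) isT isT.
  have := oiso_nth H (i:=2) (j:=0) isT isT.
  have := oiso_nth H (i:=1) (j:=3) isT isT.
  have := oiso_nth H (i:=3) (j:=1) isT isT.
  move=> /= /negbT E1 /negbT E2 /negbT E3 /negbT E4 E5.
  exists a, b; split=> //; repeat f_equal; lia.
- move=> [a [b [ab ->]]]; apply/oisoP; split=> //.
  move=> [|[|[|[|i]]]] [|[|[|[|j]]]] //= _ _; apply/idP/idP; lia.
Qed.

Definition crossing w := exists a b, a < b /\ subseq [:: a; b; a; b] w.

Lemma ncP w : noncrossing w <-> rgw w /\ ~ crossing w.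
Proof.
rewrite /noncrossing; split.
- move/andP=> [H1 H2]; split=> // [[a [b [ab Hs]]]]; move/negP: H2; apply.
  by apply/containsP; exists [:: a; b; a; b] => //; apply/oiso1212P; exists a, b.
- move=> [H1 H2]; rewrite H1 /=; apply/negP => /containsP [s Hs /oiso1212P [a [b [ab E]]]].
  by apply: H2; exists a, b; rewrite -E.
Qed.

Lemma rgw_cat m s t : rgw_aux m (s ++ t) = rgw_aux m s && rgw_aux (foldl maxn m s) t.
Proof. by elim: s m => //= x s IH m; rewrite IH andbA. Qed.

Lemma rgw_bound m s : rgw_aux m s -> all (fun x => 0 < x <= m + size s) s.
Proof.
elim: s m => //= x s IH m /andP [/andP [H1 H2] H3]; rewrite H1 /=.
apply/andP; split; first lia.
apply/allP => y /(allP (IH _ H3)) /andP [H4 H5]; rewrite H4 /=; lia.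
Qed.

Lemma rgw_pos m s x : rgw_aux m s -> x \in s -> 0 < x.
Proof. by move/rgw_bound/allP => H /H /andP []. Qed.

Lemma foldl_maxnE m s : foldl maxn m s = maxn m (nblocks s).
Proof. by elim: s m => [|x s IH] m /=; rewrite ?maxn0 // IH maxnA. Qed.

Lemma nblocksE s : nblocks s = foldl maxn 0 s.
Proof. by rewrite foldl_maxnE max0n. Qed.

Lemma rgw_mem m u c : rgw_aux m u -> 0 < c <= foldl maxn m u -> c <= m \/ c \in u.
Proof.
elim: u m => [|x u IH] m /=; first by move=> _ /andP [_ ->]; left.
move=> /andP [/andP [H1 H2] H3] Hc; case: (IH _ H3 Hc) => [Hc2|Hc2]; last by right; rewrite inE Hc2 orbT.
case: (leqP x m) => Hxm.
- by left; move: Hc2; rewrite (maxn_idPl Hxm).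
- have Ex : x = m.+1 by lia.
  move: Hc2; rewrite (maxn_idPr (ltnW Hxm)) leq_eqVlt => /orP [/eqP->|]; first by right; rewrite inE eqxx.
  by rewrite Ex ltnS; left.
Qed.

Lemma rgw_shift m k p : all (fun x => 0 < x) p -> rgw_aux (m + k) (shift k p) = rgw_aux m p.
Proof.
elim: p m => //= x p IH m /andP [Hx Hp].
rewrite (addnC k x) -addn_maxl IH // Hx /=; congr andb; apply/idP/idP; lia.
Qed.

Lemma foldl_shift m k s : foldl maxn (m + k) (shift k s) = foldl maxn m s + k.
Proof. by elim: s m => //= x s IH m; rewrite (addnC k x) -addn_maxl IH. Qed.

Definition lift1 k x := if x <= 1 then x else x + k.

Lemma lift1_mono k : {mono lift1 k : x y / x < y}.
Proof. move=> x y; rewrite /lift1; do 2 case: ifP => ?; apply/idP/idP; lia. Qed.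

Lemma shift_mono k : {mono addn k : x y / x < y}.
Proof. by move=> x y; rewrite ltn_add2l. Qed.

Lemma rgw_lift m k p : 0 < m -> rgw_aux (m + k) (map (lift1 k) p) = rgw_aux m p.
Proof.
elim: p m => //= x p IH m Hm; rewrite /lift1; case: ifP => Hx.
- case: x Hx => [|[|x]] //= _.
  by rewrite (maxn_idPl Hm) (maxn_idPl (_ : 1 <= m + k)) ?IH //; lia.
- rewrite -addn_maxl IH; last by lia.
  congr andb; apply/idP/idP; lia.
Qed.

Lemma subseq_catP (s u v : seq nat) : subseq s (u ++ v) ->
  exists s1 s2, [/\ s = s1 ++ s2, subseq s1 u & subseq s2 v].
Proof.
move/subseqP => [m Hm ->]; exists (mask (take (size u) m) u), (mask (drop (size u) m) v).
split; [|exact: mask_subseq..].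
rewrite size_cat in Hm; rewrite -mask_cat ?cat_take_drop //; by apply: size_takel; rewrite Hm leq_addr.
Qed.

Lemma subseq_map_inv (f : nat -> nat) s w : subseq s (map f w) ->
  exists2 s', s = map f s' & subseq s' w.
Proof. by move/subseqP => [m Hm ->]; exists (mask m w); rewrite ?map_mask ?mask_subseq. Qed.

Lemma subseq1 (s : seq nat) z : subseq s [:: z] -> s = [::] \/ s = [:: z].
Proof.
case: s => [|a [|b t]]; first by left.
- by rewrite /=; case: (a =P z) => [->|] //; right.
- by rewrite /=; case: (a =P z).
Qed.

Lemma subseq_rcons2 (s g : seq nat) y z : subseq (rcons s y) (rcons g z) ->
  subseq s g /\ (y != z -> subseq (rcons s y) g).
Proof.
rewrite -(cats1 g) => H; have [s1 [s2 [E H1 H2]]] := subseq_catP H.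
case: (subseq1 H2) => E2; subst s2.
- rewrite cats0 in E; rewrite -E in H1; split=> //.
  exact: subseq_trans (subseq_rcons s y) H1.
- by move: E; rewrite cats1 => /rcons_inj [-> ->]; rewrite eqxx.
Qed.

Lemma subseq_tl (x y : nat) t w : subseq (x :: t) (y :: w) -> subseq t w.
Proof. by rewrite /=; case: eqP => _ // /cons_subseq. Qed.

Lemma subseq_hd_neq (x y : nat) t w : x != y -> subseq (x :: t) (y :: w) = subseq (x :: t) w.
Proof. by rewrite /= => /negbTE ->. Qed.

Lemma cross_split (a b : nat) (A B : seq nat) : subseq [:: a; b; a; b] (A ++ B) ->
  (forall x, x \in A -> x \in B -> False) ->
  subseq [:: a; b; a; b] A \/ subseq [:: a; b; a; b] B.
Proof.
move=> /subseq_catP [s1 [s2 [E H1 H2]]] D.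
have inA x : x \in s1 -> x \in A by apply: mem_subseq.
have inB x : x \in s2 -> x \in B by apply: mem_subseq.
move: s1 E H1 inA => [|x1 [|x2 [|x3 [|x4 [|x5 s1]]]]] //= E H1 inA.
- by right; rewrite E.
- case: E => E1 E; rewrite -E1 in inA; rewrite -E in inB.
  by exfalso; apply: (D a); [apply: inA|apply: inB]; rewrite !inE eqxx ?orbT.
- case: E => E1 E2 E; rewrite -E1 -E2 in inA; rewrite -E in inB.
  by exfalso; apply: (D a); [apply: inA|apply: inB]; rewrite !inE eqxx ?orbT.
- case: E => E1 E2 E3 E; rewrite -E1 -E2 -E3 in inA; rewrite -E in inB.
  by exfalso; apply: (D b); [apply: inA|apply: inB]; rewrite !inE eqxx ?orbT.
- by move: H1; case: E => <- <- <- <- _ H1; left.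
Qed.

Lemma map4_inv (f : nat -> nat) s a b c d : [:: a; b; c; d] = map f s ->
  exists a' b' c' d', s = [:: a'; b'; c'; d'] /\ [/\ a = f a', b = f b', c = f c' & d = f d'].
Proof. by case: s => [|a' [|b' [|c' [|d' [|? ?]]]]] //= [-> -> -> ->]; exists a', b', c', d'. Qed.

Lemma mono_injn (f : nat -> nat) : {mono f : x y / x < y} -> injective f.
Proof.
move=> mf x y E; have H1 := mf x y; have H2 := mf y x.
rewrite E ltnn in H1 H2.
move: H1 H2 => /esym /negbT H1 /esym /negbT H2; lia.
Qed.

Lemma cross_map_inv (f : nat -> nat) w : {mono f : x y / x < y} ->
  crossing (map f w) -> crossing w.
Proof.
move=> mf [a [b [ab /subseq_map_inv [s' E H]]]].
have [a' [b' [c' [d' [Es [Ea Eb Ec Ed]]]]]] := map4_inv E.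
have Ha : a' = c' by apply: (mono_injn mf); rewrite -Ea -Ec.
have Hb : b' = d' by apply: (mono_injn mf); rewrite -Eb -Ed.
exists a', b'; split; first by rewrite -(mf a' b') -Ea -Eb.
by rewrite Es -Ha -Hb in H.
Qed.

Lemma cross_map (f : nat -> nat) w : {mono f : x y / x < y} ->
  crossing w -> crossing (map f w).
Proof.
move=> mf [a [b [ab H]]]; exists (f a), (f b); split; first by rewrite (mf a b).
exact: (map_subseq f H).
Qed.

Lemma cross_sub u w : subseq u w -> crossing u -> crossing w.
Proof. by move=> H [a [b [ab H2]]]; exists a, b; split=> //; exact: subseq_trans H2 H. Qed.

Lemma oiso_headE x y u v : (forall i, i < size v -> y < nth 0 v i) ->
  oiso (x :: u) (y :: v) = oiso u v && all (fun i => x < nth 0 u i) (iota 0 (size u)).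
Proof.
move=> Hv; rewrite oiso_cons; case Huv: (oiso u v) => //=.
have Hs := oiso_size Huv.
apply: eq_in_all => i; rewrite mem_iota /= add0n => Hi.
rewrite Hv -?Hs //; have := Hv i; rewrite -Hs => /(_ Hi) Hy.
rewrite (_ : (nth 0 v i < y) = false); last by apply/negbTE; rewrite -leqNgt ltnW.
case: (ltnP x (nth 0 u i)) => H //=.
- by apply/eqP/negbTE; rewrite -leqNgt ltnW.
Qed.

Lemma oiso_rcons_head u v : oiso u v -> 0 < size u ->
  oiso (rcons u (nth 0 u 0)) (rcons v (nth 0 v 0)).
Proof.
move=> H Hs; rewrite oiso_rcons ?H ?(oiso_size H) //=.
apply/allP => i; rewrite mem_iota /= add0n -(oiso_size H) => Hi.
by rewrite (oiso_nth H Hs Hi) (oiso_nth H Hi Hs) !eqxx.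
Qed.

Lemma oiso_head_last s q : oiso s q -> 0 < size q ->
  nth 0 q 0 = nth 0 q (size q).-1 -> nth 0 s 0 = nth 0 s (size s).-1.
Proof.
move=> H Hq E; have Hs := oiso_size H.
have H1 : 0 < size s by rewrite Hs.
have H2 : (size s).-1 < size s by rewrite prednK.
have := oiso_nth H H1 H2; have := oiso_nth H H2 H1.
rewrite Hs E ltnn => /negbT E1 /negbT E2; lia.
Qed.

Definition J2 g p := bracket (rcons g 1) p.

Lemma leq_nblocks s x : x \in s -> x <= nblocks s.
Proof.
elim: s => //= y s IH; rewrite inE => /orP [/eqP ->|/IH H]; first exact: leq_maxl.
exact: leq_trans H (leq_maxr _ _).
Qed.

Lemma rgw_rcons1 g : rgw g -> rgw (rcons g 1).
Proof. by rewrite /rgw -cats1 rgw_cat => ->. Qed.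

Lemma nb_pos g : 0 < nblocks (rcons g 1).
Proof. by apply: leq_nblocks; rewrite mem_rcons inE eqxx. Qed.

Lemma rgw_all_pos p : rgw p -> all (fun x => 0 < x) p.
Proof. by move=> Rp; apply/allP => x; apply: rgw_pos Rp. Qed.

Lemma subseq_rcons_same (s t : seq nat) x : subseq s t -> subseq (rcons s x) (rcons t x).
Proof. by move=> H; rewrite -!cats1 cat_subseq. Qed.

Lemma J2_nc g p : noncrossing g -> noncrossing p -> noncrossing (J2 g p).
Proof.
move=> /ncP [Rg Cg] /ncP [Rp Cp]; apply/ncP; set K := nblocks (rcons g 1).
have Pp := rgw_all_pos Rp.
split.
- rewrite /J2 /bracket /rgw rgw_cat -/K; apply/andP; split; first exact: rgw_rcons1.
  by rewrite -nblocksE -/K; have := rgw_shift 0 K Pp; rewrite add0n => ->.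
- move=> [a [b [ab H]]].
  have disj : forall x, x \in rcons g 1 -> x \in shift K p -> False.
    move=> x /leq_nblocks Hx /mapP [y Hy Ey]; have := rgw_pos Rp Hy; rewrite -/K in Hx; lia.
  case: (cross_split H disj) => H'.
  + have a0 : 0 < a by apply: (rgw_pos (rgw_rcons1 Rg)); apply: (mem_subseq H'); rewrite inE eqxx.
    have [_ H2] := subseq_rcons2 (s := [:: a; b; a]) (y := b) H'.
    by apply: Cg; exists a, b; split=> //; apply: H2; apply/eqP; lia.
  + by apply: Cp; apply: (cross_map_inv (shift_mono K)); exists a, b.
Qed.

Lemma J2_size g p : size (J2 g p) = (size g + size p).+1.
Proof. by rewrite /J2 /bracket size_cat size_rcons size_map. Qed.

Lemma split_last1 w : 1 \in w -> exists g v, w = rcons g 1 ++ v /\ 1 \notin v.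
Proof.
elim: w => //= x w IH; rewrite inE; case H1: (1 \in w).
- by case: (IH H1) => g [v [-> Hv]] _; exists (x :: g), v.
- by move=> /orP [/eqP <-|] //; exists [::], w; rewrite H1.
Qed.

Lemma rgw_head x w : rgw (x :: w) -> x = 1.
Proof. by rewrite /rgw /= => /andP [/andP [H1 H2] _]; lia. Qed.

Lemma J2_surj w : noncrossing w -> w != [::] ->
  exists g p, [/\ noncrossing g, noncrossing p & w = J2 g p].
Proof.
move=> /ncP [Rw Cw] Hne.
have H1 : 1 \in w.
  by move: Rw Hne; clear Cw; case: w => // x w' /rgw_head -> _; rewrite inE eqxx.
case: (split_last1 H1) => g [v [Ew Hv]].
set K := nblocks (rcons g 1).
move: (Rw); rewrite Ew /rgw rgw_cat -nblocksE -/K => /andP [Rg1 Rv].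
have Vbig : forall c, c \in v -> K < c.
  move=> c Hc; rewrite ltnNge; apply/negP => HcK.
  have c0 : 0 < c by apply: (rgw_pos Rw); rewrite Ew mem_cat Hc orbT.
  have c1 : c != 1 by apply: contraNneq Hv => <-.
  have := @rgw_mem 0 (rcons g 1) c Rg1; rewrite -nblocksE -/K c0 HcK => /(_ isT) [|Hcg]; first lia.
  rewrite mem_rcons inE (negbTE c1) /= in Hcg.
  clear Rv HcK; clearbody K; case: g Ew Rg1 Hcg => // y g' Ew Rg1 Hcg.
  have Ey : y = 1 by apply: rgw_head Rg1.
  rewrite Ey inE (negbTE c1) /= in Hcg.
  apply: Cw; exists 1, c; split; first lia.
  rewrite Ew Ey rcons_cons cat_cons [subseq _ _]/= ?eqxx cat_rcons.
  rewrite (_ : [:: c; 1; c] = [:: c] ++ [:: 1; c]) //; apply: cat_subseq; first by rewrite sub1seq.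
  by rewrite [subseq _ _]/= ?eqxx sub1seq.
pose p := map (subn^~ K) v.
have Ev : shift K p = v.
  by rewrite /shift /p -map_comp map_id_in // => c /Vbig Hc /=; rewrite subnKC // ltnW.
have Pp : all (fun x => 0 < x) p.
  by apply/allP => x /mapP [c /Vbig Hc ->]; rewrite subn_gt0.
exists g, p; split.
- apply/ncP; split.
    by move: Rg1; rewrite /rgw -cats1 rgw_cat => /andP [].
  move=> Cg; apply: Cw; apply: cross_sub Cg; rewrite Ew.
  exact: subseq_trans (subseq_rcons g 1) (prefix_subseq _ _).
- apply/ncP; split.
    by rewrite /rgw; have := rgw_shift 0 K Pp; rewrite add0n Ev => <-.
  move=> Cp; apply: Cw; rewrite Ew; apply: cross_sub (suffix_subseq _ _) _.
  by rewrite -Ev; exact: cross_map (shift_mono K) Cp.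
- by rewrite /J2 /bracket -/K Ev.
Qed.

Lemma last1_uniq (g v g' v' : seq nat) : rcons g 1 ++ v = rcons g' 1 ++ v' ->
  1 \notin v -> 1 \notin v' -> g = g' /\ v = v'.
Proof.
move=> E Hv Hv'.
have E2 : rev v ++ 1 :: rev g = rev v' ++ 1 :: rev g'.
  by rewrite -!rev_rcons -!rev_cat E.
have Hs : size v = size v'.
  have := congr1 (index 1) E2; rewrite !index_cat !mem_rev (negbTE Hv) (negbTE Hv') /=.
  by rewrite !size_rev !addn0.
move/eqP: E2; rewrite eqseq_cat ?size_rev // => /andP [/eqP Ev /eqP Eg].
split; first by case: Eg => /(congr1 rev); rewrite !revK.
by rewrite -(revK v) Ev revK.
Qed.

Lemma notin1_shift g p : rgw p -> 1 \notin shift (nblocks (rcons g 1)) p.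
Proof. by move=> Rp; apply/mapP => -[x Hx E]; have := rgw_pos Rp Hx; have := nb_pos g; lia. Qed.

Lemma J2_inj g p g' p' : rgw p -> rgw p' -> J2 g p = J2 g' p' -> g = g' /\ p = p'.
Proof.
move=> Rp Rp' E; have [Eg Ev] := last1_uniq E (notin1_shift g Rp) (notin1_shift g' Rp').
subst g'; split => //; exact: (inj_map (@addnI (nblocks (rcons g 1))) Ev).
Qed.

Lemma J2_contains g p rho : noncrossing g -> noncrossing p -> rgw rho ->
  contains (J2 g p) (rcons (1 :: shift 1 rho) 1) =
  contains g (1 :: shift 1 rho) || contains p (rcons (1 :: shift 1 rho) 1).
Proof.
move=> /ncP [Rg _] /ncP [Rp _] Rr.
set K := nblocks (rcons g 1).
have Hrho : forall i, i < size (shift 1 rho) -> 1 < nth 0 (shift 1 rho) i.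
  rewrite size_map => i Hi; rewrite (nth_map 0) //; have := rgw_pos Rr (mem_nth 0 Hi); by move=> H; rewrite add1n ltnS.
apply/idP/idP.
- move/containsP => [s Hs Ho].
  have HL : nth 0 s 0 = nth 0 s (size s).-1.
    apply: (oiso_head_last Ho); first by rewrite size_rcons.
    by rewrite size_rcons /= nth_rcons /= ltnn eqxx.
  move: Hs; rewrite /J2 /bracket -/K => /subseq_catP [s1 [s2 [E H1 H2]]].
  case: s1 E H1 => [|x1 s1] E H1.
  + rewrite /= in E; subst s2; have [s' Es Hs'] := subseq_map_inv H2.
    apply/orP; right; apply/containsP; exists s' => //.
    by move: Ho; rewrite Es oiso_mapl //; exact: shift_mono.
  + case/lastP: s2 E H2 => [|s2 z] E H2.
    * rewrite cats0 in E; subst s; rewrite lastI in H1 Ho.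
      have [Hb _] := subseq_rcons2 H1.
      apply/orP; left; apply/containsP; exists (belast x1 s1) => //.
      have Hsz : size (belast x1 s1) = size (1 :: shift 1 rho).
        by have := oiso_size Ho; rewrite !size_rcons size_belast => -[].
      by move: Ho; rewrite oiso_rcons // => /andP [].
    * exfalso; have Hx1 : x1 <= K by apply: leq_nblocks; apply: (mem_subseq H1); rewrite inE eqxx.
      have Hz : K < z.
        have /mapP [y Hy ->] : z \in shift K p by apply: (mem_subseq H2); rewrite mem_rcons inE eqxx.
        by have := rgw_pos Rp Hy; lia.
      move: HL; rewrite nth_last E -rcons_cat last_rcons /= => Exz; move: Hx1; by rewrite Exz leqNgt Hz.
- move/orP => [/containsP [s Hs Ho] | /containsP [s Hs Ho]].
  + case: s Hs Ho => [|x t] Hs Ho; first by have := oiso_size Ho.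
    case: g Rg Hs {K} => [|y g'] Rg Hs //.
    have Ey := rgw_head Rg; subst y.
    have x0 : 0 < x by apply: (rgw_pos Rg); apply: (mem_subseq Hs); rewrite inE eqxx.
    move: (Ho); rewrite oiso_headE // => /andP [Ht /allP Hx].
    have Hu : oiso (1 :: t) (1 :: shift 1 rho).
      rewrite oiso_headE // Ht /=; apply/allP => i Hi; have := Hx i Hi; lia.
    apply/containsP; exists (rcons (1 :: t) 1).
      apply: subseq_trans (prefix_subseq _ _); rewrite /= ?eqxx.
      by apply: subseq_rcons_same; exact: subseq_tl Hs.
    exact: (oiso_rcons_head Hu).
  + apply/containsP; exists (shift (nblocks (rcons g 1)) s).
      by apply: subseq_trans (suffix_subseq _ _); exact: map_subseq.
    by rewrite oiso_mapl //; exact: shift_mono.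
Qed.

Definition J1 g p := 1 :: shift 1 g ++ map (lift1 (nblocks g)) p.

Lemma rgw_to1 p : rgw p -> rgw_aux 1 p.
Proof. by case: p => //= x p' /[dup] /rgw_head -> /=; rewrite /rgw /=. Qed.

Lemma rgw_from1 p : rgw_aux 1 p -> (forall x p', p = x :: p' -> x = 1) -> rgw p.
Proof. by case: p => // x p' H /(_ x p' erefl) Ex; subst x; rewrite /rgw /=; move: H => /=. Qed.

Lemma G_letters g x : rgw g -> x \in shift 1 g -> 2 <= x <= (nblocks g).+1.
Proof.
move=> Rg /mapP [y Hy ->]; have := rgw_pos Rg Hy; have := leq_nblocks Hy; lia.
Qed.

Lemma P_letters g p x : rgw p -> x \in map (lift1 (nblocks g)) p -> x = 1 \/ (nblocks g).+2 <= x.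
Proof.
move=> Rp /mapP [y Hy ->]; have := rgw_pos Rp Hy; rewrite /lift1; case: ifP => H1 H2.
- by left; lia.
- by right; lia.
Qed.

Lemma GP_disj g p x : rgw g -> rgw p -> x \in shift 1 g -> x \in map (lift1 (nblocks g)) p -> False.
Proof.
move=> Rg Rp H1 H2; have := G_letters Rg H1; case: (P_letters Rp H2) => H3; lia.
Qed.

Lemma rgw_J1 g p : rgw g -> rgw p -> rgw (J1 g p).
Proof.
move=> Rg Rp; rewrite /rgw /J1 /= rgw_cat.
have Pg := rgw_all_pos Rg.
have := rgw_shift 0 1 Pg; rewrite add0n => ->; rewrite (Rg : rgw_aux 0 g) /=.
have := foldl_shift 0 1 g; rewrite add0n => ->; rewrite -nblocksE addnC.
by rewrite rgw_lift // rgw_to1.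
Qed.

Lemma J1_nc g p : noncrossing g -> noncrossing p -> noncrossing (J1 g p).
Proof.
move=> /ncP [Rg Cg] /ncP [Rp Cp]; apply/ncP; split; first exact: rgw_J1.
move=> [a [b [ab H]]]; move: H; rewrite /J1 [subseq _ _]/=.
case: (a =P 1) => [Ea|Ea].
- subst a => /subseq_catP [t2 [t3 [E H2 H3]]].
  have G2 x : x \in t2 -> 2 <= x by move=> Hx; have := G_letters Rg (mem_subseq H2 Hx); lia.
  case: t2 E H2 G2 => [|x2 [|y2 [|z2 [|? ?]]]] //= E H2 G2.
  + subst t3; case: p Rp Cp H3 => [|y p''] Rp Cp H3; first by [].
    have Ey := rgw_head Rp; subst y.
    have E1 : map (lift1 (nblocks g)) (1 :: p'') = 1 :: map (lift1 (nblocks g)) p'' by [].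
    rewrite E1 subseq_hd_neq in H3; last by apply/eqP; lia.
    apply: Cp; apply: (cross_map_inv (lift1_mono (nblocks g))); exists 1, b; split=> //.
  + case: E => Eb Et; rewrite -Et in H3; rewrite -Eb in H2; exfalso; apply: (@GP_disj g p b Rg Rp).
      by apply: (mem_subseq H2); rewrite inE eqxx.
    by apply: (mem_subseq H3); rewrite !inE eqxx orbT.
  + by case: E => _ Ey2 _; have := G2 y2; rewrite !inE eqxx orbT -Ey2 => /(_ isT).
  + by case: E => _ Ey2 _ _; have := G2 y2; rewrite !inE eqxx orbT -Ey2 => /(_ isT).
- move=> H; case: (cross_split H (fun x => @GP_disj g p x Rg Rp)) => H'.
  + by apply: Cg; apply: (cross_map_inv (shift_mono 1)); exists a, b.
  + by apply: Cp; apply: (cross_map_inv (lift1_mono (nblocks g))); exists a, b.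
Qed.

Lemma J1_size g p : size (J1 g p) = (size g + size p).+1.
Proof. by rewrite /J1 /= size_cat !size_map. Qed.

Lemma split_first1 (w : seq nat) : exists G P, [/\ w = G ++ P, 1 \notin G &
   (P = [::] \/ exists r, P = 1 :: r)].
Proof.
elim: w => [|x w [G [P [E HG HP]]]]; first by exists [::], [::]; split=> //; left.
case: (x =P 1) => [->|Hx].
- by exists [::], (1 :: w); split=> //; right; exists w.
- exists (x :: G), P; split; first by rewrite E.
    by rewrite inE negb_or HG andbT; apply/eqP => E1; apply: Hx.
  exact: HP.
Qed.

Lemma nblocks_pred s : nblocks (map predn s) = predn (nblocks s).
Proof. by elim: s => //= x s ->; lia. Qed.

Lemma J1_surj w : noncrossing w -> w != [::] ->
  exists g p, [/\ noncrossing g, noncrossing p & w = J1 g p].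
Proof.
move=> /ncP [Rw Cw] Hne.
case: w Rw Cw Hne => // x w' Rw Cw _.
have Ex := rgw_head Rw; subst x.
have [G [P [E HG HP]]] := split_first1 w'; subst w'.
move: (Rw); rewrite /rgw /= rgw_cat => /andP [RG RP].
set M := foldl maxn 1 G.
have Gbig c : c \in G -> 2 <= c.
  move=> Hc; have c0 : 0 < c by apply: (rgw_pos Rw); rewrite inE mem_cat Hc orbT.
  have : c != 1 by apply: contraNneq HG => <-.
  lia.
have Pbig c : c \in P -> c = 1 \/ M < c.
  move=> Hc; have c0 : 0 < c by apply: (rgw_pos Rw); rewrite inE mem_cat Hc !orbT.
  case: (c =P 1) => [|c1]; [by left|right].
  rewrite ltnNge; apply/negP => HcM.
  have R1G : rgw_aux 0 (1 :: G) by move: Rw; rewrite /rgw -cat_cons rgw_cat => /andP [].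
  have := @rgw_mem 0 (1 :: G) c R1G; rewrite /= -/M c0 HcM => /(_ isT) [|]; first lia.
  rewrite inE => /orP [/eqP E1|HcG]; first by apply: c1.
  case: HP => [EP|[r EP]]; first by rewrite EP in Hc.
  subst P; rewrite inE in Hc.
  case/orP: Hc => [/eqP E1|Hcr]; first by apply: c1.
  apply: Cw; exists 1, c; split; first lia.
  rewrite [subseq _ _]/= ?eqxx.
  rewrite (_ : [:: c; 1; c] = [:: c] ++ [:: 1; c]) //; apply: cat_subseq; first by rewrite sub1seq.
  by rewrite [subseq _ _]/= ?eqxx sub1seq.
pose g := map predn G.
have EM : M = (nblocks g).+1.
  by rewrite /M foldl_maxnE nblocks_pred; lia.
pose p := map (fun y => if y <= 1 then y else y - nblocks g) P.
have EG : shift 1 g = G.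
  rewrite /shift /g -map_comp map_id_in // => c /Gbig Hc /=; lia.
have EP : map (lift1 (nblocks g)) p = P.
  rewrite /p -map_comp map_id_in // => c Hc /=; rewrite /lift1.
  case: (Pbig c Hc) => [->//|Hc']; rewrite EM in Hc'.
  have E1 : (c <= 1) = false by apply/negbTE; rewrite -ltnNge; lia.
  rewrite E1; have E2 : (c - nblocks g <= 1) = false by apply/negbTE; rewrite -ltnNge; lia.
  rewrite E2; lia.
have Pg : all (fun x => 0 < x) g.
  by apply/allP => c /mapP [d /Gbig Hd ->]; lia.
have Pp : all (fun x => 0 < x) p.
  apply/allP => c /mapP [d Hd ->]; case: (Pbig d Hd) => [->//|Hd']; rewrite EM in Hd'.
  case: ifP => H1; lia.
exists g, p; split.
- apply/ncP; split.
    by rewrite /rgw; have := rgw_shift 0 1 Pg; rewrite add0n EG => <-.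
  move=> Cg; apply: Cw; apply: (cross_sub (w := 1 :: G ++ P) (u := G)).
    by apply: subseq_trans (prefix_subseq _ _) (subseq_cons _ _).
  by rewrite -EG; exact: cross_map (shift_mono 1) Cg.
- apply/ncP; split.
    apply: rgw_from1.
      by have := @rgw_lift 1 (nblocks g) p isT; rewrite add1n -EM EP => <-.
    move=> x0 p' Ep; case: HP => [EP0|[r Er]].
      by move: EP; rewrite Ep EP0.
    by move: EP; rewrite Ep Er /= => -[]; rewrite /lift1; case: ifP; lia.
  move=> Cp; apply: Cw; apply: (cross_sub (w := 1 :: G ++ P) (u := P)).
    by apply: subseq_trans (suffix_subseq _ _) (subseq_cons _ _).
  by rewrite -EP; exact: cross_map (lift1_mono _) Cp.
- by rewrite /J1 EG EP.
Qed.

Lemma first1_uniq (G P G' P' : seq nat) : G ++ P = G' ++ P' -> 1 \notin G -> 1 \notin G' ->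
  (P = [::] \/ exists r, P = 1 :: r) -> (P' = [::] \/ exists r, P' = 1 :: r) -> G = G' /\ P = P'.
Proof.
move=> E HG HG' HP HP'.
have I0 (Q : seq nat) : (Q = [::] \/ exists r, Q = 1 :: r) -> index 1 Q = 0.
  by case=> [->|[r ->]] //=; rewrite eqxx.
have Hs : size G = size G'.
  by have := congr1 (index 1) E; rewrite !index_cat (negbTE HG) (negbTE HG') I0 // I0 // !addn0.
by move/eqP: E; rewrite eqseq_cat // => /andP [/eqP -> /eqP ->].
Qed.

Lemma J1_inj g p g' p' : rgw g -> rgw p -> rgw g' -> rgw p' -> J1 g p = J1 g' p' -> g = g' /\ p = p'.
Proof.
move=> Rg Rp Rg' Rp' [E].
have n1 (h : seq nat) : rgw h -> 1 \notin shift 1 h.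
  by move=> Rh; apply/negP => /(G_letters Rh); lia.
have h1 (h : seq nat) k : rgw h -> map (lift1 k) h = [::] \/ exists r, map (lift1 k) h = 1 :: r.
  case: h => [|y h] Rh; [by left|right]; have Ey := rgw_head Rh; subst y.
  by exists (map (lift1 k) h).
have [Eg Ep] := first1_uniq E (n1 _ Rg) (n1 _ Rg') (h1 _ _ Rp) (h1 _ _ Rp').
have Eg' : g = g' by exact: (inj_map (@addnI 1) Eg).
subst g'; split=> //; apply: (@inj_map _ _ (lift1 (nblocks g))); [exact: (mono_injn (lift1_mono (nblocks g)))|exact: Ep].
Qed.

Lemma J1_contains g p sigma : noncrossing g -> noncrossing p -> rgw sigma -> 0 < size sigma ->
  nth 0 sigma 0 = nth 0 sigma (size sigma).-1 ->
  contains (J1 g p) (1 :: shift 1 sigma) = contains g sigma || contains p (1 :: shift 1 sigma).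
Proof.
move=> Ng Np Rs Ss HLs; have [Rg _] := (ncP g).1 Ng; have [Rp _] := (ncP p).1 Np.
have Hsig : forall i, i < size (shift 1 sigma) -> 1 < nth 0 (shift 1 sigma) i.
  rewrite size_map => i Hi; rewrite (nth_map 0) //; have := rgw_pos Rs (mem_nth 0 Hi).
  by move=> H; rewrite add1n ltnS.
have RJ := rgw_J1 Rg Rp.
apply/idP/idP.
- move/containsP => [s Hs Ho].
  case: s Hs Ho => [|x t] Hs Ho; first by have := oiso_size Ho.
  have x0 : 0 < x by apply: (rgw_pos RJ); apply: (mem_subseq Hs); rewrite inE eqxx.
  move: (Ho); rewrite oiso_headE // => /andP [Ht /allP Hx].
  have Ht' : oiso t sigma by move: Ht; rewrite oiso_mapr //; exact: shift_mono.
  have Hts : 0 < size t by rewrite (oiso_size Ht').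
  have HLt := oiso_head_last Ht' Ss HLs.
  clear Ho; move: Hs; rewrite /J1 => /subseq_tl /subseq_catP [t2 [t3 [E H2 H3]]].
  case: t2 E H2 => [|x2 t2] E H2.
  + rewrite /= in E; subst t3.
    case: p Np Rp H3 {RJ} => [|y p''] Np Rp H3; first by move: H3 Hts; case: (t) => // ? ?; rewrite /=; case: ifP.
    have Ey := rgw_head Rp; subst y.
    case: t Ht Ht' Hts Hx HLt H3 => [|z t'] // Ht Ht' Hts Hx HLt H3.
    have z1 : 1 < z by have := Hx 0 isT; rewrite /=; lia.
    have E1 : map (lift1 (nblocks g)) (1 :: p'') = 1 :: map (lift1 (nblocks g)) p'' by [].
    rewrite E1 subseq_hd_neq in H3; last by apply/eqP; lia.
    have H4 : subseq (1 :: z :: t') (map (lift1 (nblocks g)) (1 :: p'')).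
      by rewrite E1 [subseq _ _]/= ?eqxx.
    have [s' Es Hs'] := subseq_map_inv H4.
    apply/orP; right; apply/containsP; exists s' => //.
    rewrite -(oiso_mapl _ _ (lift1_mono (nblocks g))) -Es oiso_headE // Ht andTb.
    apply/allP => i Hi; have := Hx i Hi; lia.
  + case/lastP: t3 E H3 => [|t3 z] E H3.
    * rewrite cats0 in E; rewrite -E in H2; have [s' Es Hs'] := subseq_map_inv H2.
      apply/orP; left; apply/containsP; exists s' => //.
      by move: Ht'; rewrite Es oiso_mapl //; exact: shift_mono.
    * exfalso; apply: (@GP_disj g p x2 Rg Rp).
        by apply: (mem_subseq H2); rewrite inE eqxx.
      move: HLt; rewrite nth_last E -rcons_cat last_rcons /= => ->.
      by apply: (mem_subseq H3); rewrite mem_rcons inE eqxx.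
- move/orP => [/containsP [s Hs Ho] | /containsP [s Hs Ho]].
  + apply/containsP; exists (1 :: shift 1 s).
      rewrite /J1 [subseq _ _]/= ?eqxx.
      by apply: subseq_trans (prefix_subseq _ _); exact: map_subseq.
    rewrite oiso_headE // oiso_map ?Ho /=; try exact: shift_mono.
    apply/allP => i; rewrite mem_iota /= add0n size_map => Hi; rewrite (nth_map 0) //.
    have := rgw_pos Rg (mem_subseq Hs (mem_nth 0 Hi)); by move=> H; rewrite add1n ltnS.
  + apply/containsP; exists (map (lift1 (nblocks g)) s).
      apply: subseq_trans (subseq_cons _ 1); rewrite /J1.
      by apply: subseq_trans (suffix_subseq _ _); exact: map_subseq.
    by rewrite oiso_mapl //; exact: lift1_mono.
Qed.

Lemma uniq_flatten_map (T U : eqType) (F : T -> seq U) s : uniq s ->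
  {in s, forall y, uniq (F y)} ->
  (forall y1 y2 x, y1 \in s -> y2 \in s -> x \in F y1 -> x \in F y2 -> y1 = y2) ->
  uniq (flatten (map F s)).
Proof.
elim: s => //= y s IH /andP [Hy Us] UF D.
rewrite cat_uniq UF ?inE ?eqxx //= IH //; first last.
- by move=> y1 y2 x H1 H2; apply: D; rewrite inE ?H1 ?H2 orbT.
- by move=> y' Hy'; apply: UF; rewrite inE Hy' orbT.
rewrite andbT; apply/hasPn => x /flattenP [t /mapP [y' Hy' ->] Hx]; apply/negP => Hx'.
have E := D y y' x (mem_head _ _) ltac:(by rewrite inE Hy' orbT) Hx' Hx.
by move: Hy; rewrite E Hy'.
Qed.

Lemma mem_words k m w : (w \in words k m) = (size w == k) && all (fun x => 0 < x <= m) w.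
Proof.
elim: k w => [|k IH] [|x w] //=.
  by apply/negP => /flattenP [s /mapP [y _ ->] /mapP [v _]].
rewrite eqSS; apply/flattenP/idP.
- move=> [s /mapP [y Hy ->] /mapP [v Hv [-> ->]]].
  move: Hv; rewrite IH => /andP [/eqP -> ->]; rewrite eqxx andbT /=.
  by move: Hy; rewrite mem_iota; lia.
- move=> /andP [Hs /andP [Hx Hw]]; exists [seq x :: v | v <- words k m].
    by apply/mapP; exists x => //; rewrite mem_iota; lia.
  by apply/mapP; exists w => //; rewrite IH Hw andbT.
Qed.

Lemma uniq_words k m : uniq (words k m).
Proof.
elim: k => //= k IH; apply: uniq_flatten_map; first exact: iota_uniq.
- by move=> y _; rewrite map_inj_uniq // => a b [].
- by move=> y1 y2 x _ _ /mapP [v _ ->] /mapP [v' _ [->]].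
Qed.

Definition NCl k := filter noncrossing (words k k).

Lemma mem_NCl k w : (w \in NCl k) = noncrossing w && (size w == k).
Proof.
rewrite mem_filter mem_words; case Hn: (noncrossing w) => //=.
case: eqP => //= Hs; apply/allP => x Hx.
have [Rw _] := (ncP w).1 Hn; have := allP (rgw_bound Rw) x Hx; lia.
Qed.

Lemma uniq_NCl k : uniq (NCl k).
Proof. exact/filter_uniq/uniq_words. Qed.

Lemma count_decomp (J : seq nat -> seq nat -> seq nat) (P : pred (seq nat)) n :
  (forall g p, noncrossing g -> noncrossing p -> noncrossing (J g p)) ->
  (forall g p, size (J g p) = (size g + size p).+1) ->
  (forall w, noncrossing w -> w != [::] ->
     exists g p, [/\ noncrossing g, noncrossing p & w = J g p]) ->
  (forall g p g' p', noncrossing g -> noncrossing p -> noncrossing g' -> noncrossing p' ->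
     J g p = J g' p' -> g = g' /\ p = p') ->
  count P (NCl n.+1) =
  sumn [seq sumn [seq count (fun p => P (J g p)) (NCl (n - m)) | g <- NCl m] | m <- iota 0 n.+1].
Proof.
move=> Hnc Hsz Hsurj Hinj.
set R := flatten [seq [seq J g p | g <- NCl m, p <- NCl (n - m)] | m <- iota 0 n.+1].
have UR : uniq R.
  apply: uniq_flatten_map; first exact: iota_uniq.
  - move=> m _; apply: allpairs_uniq; try exact: uniq_NCl.
    move=> [g p] [g' p'] /allpairsP [[a b] /= [Ha Hb E1]] /allpairsP [[a' b'] /= [Ha' Hb' E2]] E.
    case: E1 => Ea Eb; case: E2 => Ea' Eb'; subst g p g' p'.
    move: Ha Hb Ha' Hb'; rewrite !mem_NCl => /andP [Ha _] /andP [Hb _] /andP [Ha' _] /andP [Hb' _].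
    by have [-> ->] := Hinj _ _ _ _ Ha Hb Ha' Hb' E.
  - move=> m1 m2 x _ _ /allpairsP [[a b] [Ha Hb ->]] /allpairsP [[a' b'] [Ha' Hb' E]] /=.
    move: Ha Hb Ha' Hb'; rewrite !mem_NCl => /andP [Ha /eqP <-] /andP [Hb _] /andP [Ha' /eqP <-] /andP [Hb' _].
    by have [-> _] := Hinj _ _ _ _ Ha Hb Ha' Hb' E.
have Hperm : perm_eq (NCl n.+1) R.
  apply: uniq_perm; [exact: uniq_NCl | exact: UR | move=> w].
  apply/idP/idP.
  - rewrite mem_NCl => /andP [Nw /eqP Sw].
    have [g [p [Ng Np Ew]]] : exists g p, [/\ noncrossing g, noncrossing p & w = J g p].
      by apply: Hsurj => //; apply/eqP => E; rewrite E in Sw.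
    have Hs : size g + size p = n by move: Sw; rewrite Ew Hsz => -[].
    apply/flattenP; exists [seq J g0 p0 | g0 <- NCl (size g), p0 <- NCl (n - size g)].
      by apply/mapP; exists (size g) => //; rewrite mem_iota; lia.
    apply/allpairsP; exists (g, p); rewrite !mem_NCl Ng Np Ew /=; split=> //.
    by apply/eqP; lia.
  - move/flattenP => [t /mapP [m Hm ->] /allpairsP [[g p] [Hg Hp ->]]] /=.
    move: Hg Hp Hm; rewrite !mem_NCl mem_iota => /andP [Ng /eqP Sg] /andP [Np /eqP Sp] Hm.
    by rewrite Hnc //= Hsz Sg Sp; apply/eqP; lia.
rewrite (permP Hperm) /R count_flatten -map_comp.
congr sumn; apply: eq_map => m /=; rewrite count_flatten -map_comp.
by congr sumn; apply: eq_map => g /=; rewrite count_map.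
Qed.

Lemma nc_avE k a : nc_av k a = count (fun w => ~~ contains w a) (NCl k).
Proof. by rewrite /NCl count_filter /nc_av; apply: eq_count => w /=; rewrite andbC. Qed.

Lemma sumn_count_mul (T : Type) (b : pred T) (L : seq T) c :
  sumn [seq b g * c | g <- L] = count b L * c.
Proof. by elim: L => //= x L ->; rewrite mulnDl. Qed.

Lemma rec_side2 sigma n : noncrossing sigma -> 0 < size sigma ->
  nth 0 sigma 0 = nth 0 sigma (size sigma).-1 ->
  nc_av n.+1 (1 :: shift 1 sigma) =
  sumn [seq nc_av m sigma * nc_av (n - m) (1 :: shift 1 sigma) | m <- iota 0 n.+1].
Proof.
move=> Ns Ss HL; have [Rs _] := (ncP sigma).1 Ns.
rewrite nc_avE (count_decomp _ n J1_nc J1_size J1_surj); last first.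
  by move=> g p g' p' Ng Np Ng' Np'; apply: J1_inj;
     [exact: ((ncP _).1 Ng).1|exact: ((ncP _).1 Np).1|exact: ((ncP _).1 Ng').1|exact: ((ncP _).1 Np').1].
congr sumn; apply: eq_map => m /=; rewrite nc_avE nc_avE -sumn_count_mul.
congr sumn; apply/eq_in_map => g; rewrite mem_NCl => /andP [Ng _].
transitivity (count (fun p => ~~ contains g sigma && ~~ contains p (1 :: shift 1 sigma)) (NCl (n - m))).
  apply: eq_in_count => p; rewrite mem_NCl => /andP [Np _].
  by rewrite J1_contains // negb_or.
case: (contains g sigma) => /=; first by rewrite mul0n; elim: (NCl (n - m)).
by rewrite mul1n.
Qed.

Lemma rec_side1 rho n : noncrossing rho ->
  nc_av n.+1 (rcons (1 :: shift 1 rho) 1) =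
  sumn [seq nc_av m (1 :: shift 1 rho) * nc_av (n - m) (rcons (1 :: shift 1 rho) 1) | m <- iota 0 n.+1].
Proof.
move=> Nr; have [Rr _] := (ncP rho).1 Nr.
rewrite nc_avE (count_decomp _ n J2_nc J2_size J2_surj); last first.
  by move=> g p g' p' Ng Np Ng' Np'; apply: J2_inj;
     [exact: ((ncP _).1 Np).1|exact: ((ncP _).1 Np').1].
congr sumn; apply: eq_map => m /=; rewrite nc_avE nc_avE -sumn_count_mul.
congr sumn; apply/eq_in_map => g; rewrite mem_NCl => /andP [Ng _].
transitivity (count (fun p => ~~ contains g (1 :: shift 1 rho) &&
                              ~~ contains p (rcons (1 :: shift 1 rho) 1)) (NCl (n - m))).
  apply: eq_in_count => p; rewrite mem_NCl => /andP [Np _].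
  by rewrite J2_contains // negb_or.
case: (contains g _) => /=; first by rewrite mul0n; elim: (NCl (n - m)).
by rewrite mul1n.
Qed.

Unset Implicit Arguments.
Theorem theorem3p8 (sigma rho : seq nat) :
  noncrossing sigma -> connected sigma -> noncrossing rho ->
  nc_equiv sigma (1 :: shift 1 rho) ->
  nc_equiv (1 :: shift 1 sigma) (rcons (1 :: shift 1 rho) 1).
Proof.
move=> Ns Cs Nr Heq.
have Ss : 0 < size sigma.
  by case: sigma Ns Cs Heq => // _ _ Heq; have := Heq 0; rewrite /nc_av /=.
have [Rs _] := (ncP sigma).1 Ns.
have HL : nth 0 sigma 0 = nth 0 sigma (size sigma).-1.
  have Hne : sigma != [::] by case: (sigma) Ss.
  have [g [p [Ng Np E]]] := J2_surj Ns Hne.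
  case: p Np E => [|y p'] Np E.
  - rewrite /J2 /bracket /= cats0 in E; rewrite E size_rcons /= [in RHS]nth_rcons ltnn eqxx.
    case: g Ng E => [|z g'] Ng E; first by [].
    by rewrite E in Rs; rewrite /= (rgw_head Rs).
  - exfalso; apply: Cs; exists (rcons g 1), (y :: p'); split=> //.
    + exact: rgw_rcons1 ((ncP _).1 Ng).1.
    + exact: ((ncP _).1 Np).1.
    + by case: (g).
move=> n; elim: n {-2}n (leqnn n) => [|n IH] k Hk.
  by move: Hk; rewrite leqn0 => /eqP ->; rewrite /nc_av /=.
case: k Hk => [|k] Hk; first by rewrite /nc_av /=.
rewrite rec_side2 // rec_side1 //; congr sumn; apply/eq_in_map => m.
rewrite mem_iota => Hm; rewrite Heq IH //; lia.
Qed.
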